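(* $P(2,3)=3$, and $P(2^k,3)=6$ for every integer $k>1$.
   Context: For positive integers $m,n$, let $\mathbf{Z}_m$ be the integers modulo $m$ and $T:\mathbf{Z}_m^n\to\mathbf{Z}_m^n$, $T(a_0,\dots,a_{n-1})=(a_0+a_1,a_1+a_2,\dots,a_{n-1}+a_0)$. For $\mathbf{a}\in\mathbf{Z}_m^n$ the cycle length of $(T^k\mathbf{a})_{k\ge0}$ is the smallest positive integer $P$ such that there is $N$ with $T^{k+P}\mathbf{a}=T^k\mathbf{a}$ for all $k\ge N$. $P(m,n)$ denotes the maximum of these cycle lengths over all $\mathbf{a}\in\mathbf{Z}_m^n$. *)

(* Defs.v *)
From mathcomp Require Import all_boot all_order all_algebra.
Set Implicit Arguments. Unset Strict Implicit. Unset Printing Implicit Defensive.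
Import GRing.Theory.
Local Open Scope ring_scope.

(* Vectors in Z_m^n, indexed by 'I_n.  NB: 'Z_m is Z/mZ only for m >= 2;
   the statement below only uses m = 2 and m = 2^k, k > 1. *)
Definition vecZ (m n : nat) := {ffun 'I_n -> 'Z_m}.

Definition Tmap (m n : nat) (a : vecZ m n) : vecZ m n :=
  [ffun i : 'I_n => a i + a (ordS i)].

Definition is_eventual_period (m n : nat) (a : vecZ m n) (Q : nat) : Prop :=
  (0 < Q)%N /\ exists N : nat, forall k : nat, (N <= k)%N ->
     iter (k + Q) (@Tmap m n) a = iter k (@Tmap m n) a.

Definition cycle_length (m n : nat) (a : vecZ m n) (c : nat) : Prop :=
  is_eventual_period a c /\ forall Q, is_eventual_period a Q -> (c <= Q)%N.

Definition Pmax_is (m n p : nat) : Prop :=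
  (exists a : vecZ m n, cycle_length a p) /\
  forall (a : vecZ m n) (c : nat), cycle_length a c -> (c <= p)%N.

(* Main.v *)
Require Import Defs.
From mathcomp Require Import all_boot all_order all_algebra.
From mathcomp Require Import ring.
Import GRing.Theory.
Set Implicit Arguments.
Unset Strict Implicit.

Section Aux.
Local Open Scope ring_scope.
Variable m : nat.
Local Notation V := (vecZ m 3).
Local Notation T := (@Tmap m 3).

Definition o0 : 'I_3 := @Ordinal 3 0 isT.
Definition o1 : 'I_3 := @Ordinal 3 1 isT.
Definition o2 : 'I_3 := @Ordinal 3 2 isT.

Lemma ordsplit (P : 'I_3 -> Prop) : P o0 -> P o1 -> P o2 -> forall i, P i.
Proof.
move=> h0 h1 h2 [[|[|[|i]]] Hi] //.
- by rewrite (_ : Ordinal Hi = o0) //; apply: val_inj.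
- by rewrite (_ : Ordinal Hi = o1) //; apply: val_inj.
- by rewrite (_ : Ordinal Hi = o2) //; apply: val_inj.
Qed.

Lemma vecP3 (a b : V) : a o0 = b o0 -> a o1 = b o1 -> a o2 = b o2 -> a = b.
Proof. move=> h0 h1 h2; apply/ffunP; exact: ordsplit. Qed.

Lemma tE0 (v : V) : T v o0 = v o0 + v o1.
Proof. by rewrite /Tmap ffunE; congr (_ + v _); apply: val_inj. Qed.
Lemma tE1 (v : V) : T v o1 = v o1 + v o2.
Proof. by rewrite /Tmap ffunE; congr (_ + v _); apply: val_inj. Qed.
Lemma tE2 (v : V) : T v o2 = v o2 + v o0.
Proof. by rewrite /Tmap ffunE; congr (_ + v _); apply: val_inj. Qed.

Definition sv (v : V) := v o0 + v o1 + v o2.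

Lemma sT (v : V) : sv (T v) = 2%:R * sv v.
Proof. rewrite /sv !(tE0, tE1, tE2); ring. Qed.

Lemma s_iter n (v : V) : sv (iter n T v) = (2%:R ^+ n) * sv v.
Proof. elim: n => [|n IH]; first by rewrite mul1r. by rewrite iterS sT IH exprS mulrA. Qed.

Lemma T3 (v : V) i : iter 3 T v i = - v i + 3%:R * sv v.
Proof.
move: i; apply: ordsplit;
 rewrite /sv !iterS /= !(tE0, tE1, tE2); ring.
Qed.

Lemma T6 (v : V) i : iter 6 T v i = v i + 21%:R * sv v.
Proof.
rewrite (iterD 3 3) T3 T3 -/(iter 3 T v) s_iter; ring.
Qed.

Definition Dm (v : V) : V := [ffun i => v i - v (ordS i)].

Lemma DE0 (v : V) : Dm v o0 = v o0 - v o1.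
Proof. by rewrite ffunE; congr (_ - v _); apply: val_inj. Qed.
Lemma DE1 (v : V) : Dm v o1 = v o1 - v o2.
Proof. by rewrite ffunE; congr (_ - v _); apply: val_inj. Qed.
Lemma DE2 (v : V) : Dm v o2 = v o2 - v o0.
Proof. by rewrite ffunE; congr (_ - v _); apply: val_inj. Qed.

Lemma DT (v : V) : T (Dm v) = Dm (T v).
Proof. apply: vecP3; rewrite !(tE0, tE1, tE2, DE0, DE1, DE2); ring. Qed.

Lemma D_iter n (v : V) : iter n T (Dm v) = Dm (iter n T v).
Proof. elim: n => [//|n IH]; by rewrite !iterS IH DT. Qed.

Lemma sD (v : V) : sv (Dm v) = 0.
Proof. rewrite /sv !(DE0, DE1, DE2); ring. Qed.

Lemma T6_0 (v : V) : sv v = 0 -> iter 6 T v = v.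
Proof. move=> h; apply/ffunP => i; by rewrite T6 h mulr0 addr0. Qed.

Lemma T6N (v : V) N : sv v = 0 -> iter (6 * N) T v = v.
Proof.
move=> h; elim: N => [//|N IH]; by rewrite mulnS iterD IH T6_0.
Qed.

Definition e0 : V := [ffun i => if i == o0 then 1 else 0].
Lemma e0E0 : e0 o0 = 1. Proof. by rewrite ffunE. Qed.
Lemma e0E1 : e0 o1 = 0. Proof. by rewrite ffunE. Qed.
Lemma e0E2 : e0 o2 = 0. Proof. by rewrite ffunE. Qed.

End Aux.

Lemma pow2_0 k n : (k <= n)%N -> (0 < k)%N -> (2%:R ^+ n : 'Z_(2 ^ k))%R = 0%R.
Proof.
move=> hkn hk.
have h1 : (1 < 2 ^ k)%N by rewrite -{1}(expn0 2) ltn_exp2l.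
rewrite -natrX -(subnKC hkn) expnD natrM pchar_Zp // mul0r.
by [].
Qed.

Lemma two_neq0 k : (1 < k)%N -> (2%:R : 'Z_(2 ^ k))%R != 0%R.
Proof.
move=> hk.
have h4 : (4 <= 2 ^ k)%N by rewrite (_ : 4 = 2 ^ 2)%N // leq_exp2l.
apply/eqP => /(congr1 val) /=.
rewrite Zp_cast ?(leq_trans _ h4) // !modn_small //; by apply: leq_trans h4.
Qed.

Lemma Z2_opp (x : 'Z_2) : (- x = x)%R.
Proof. by apply/eqP; rewrite eq_sym -addr_eq0 -mulr2n -mulr_natr pchar_Zp // mulr0. Qed.


Lemma iterpN m p (w : vecZ m 3) N :
  (forall w : vecZ m 3, sv w = 0%R -> iter p (@Tmap m 3) w = w) ->
  sv w = 0%R -> iter (p * N) (@Tmap m 3) w = w.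
Proof.
move=> Hp h; elim: N => [|N IH]; first by rewrite muln0.
by rewrite mulnS iterD IH Hp.
Qed.

Lemma minimal_red m p (a : vecZ m 3) Q :
  (0 < p)%N ->
  (forall w : vecZ m 3, sv w = 0%R -> iter p (@Tmap m 3) w = w) ->
  is_eventual_period a Q -> iter Q (@Tmap m 3) (Dm a) = Dm a.
Proof.
move=> p0 Hp [Q0 [N HN]].
have := HN (p * N)%N (leq_pmull _ p0).
move/(congr1 (@Dm m)); rewrite -!D_iter addnC iterD !iterpN //; exact: sD.
Qed.

Lemma upper m p (P : forall a : vecZ m 3, is_eventual_period a p) :
  forall (a : vecZ m 3) (c : nat), cycle_length a c -> (c <= p)%N.
Proof. by move=> a c [_ H]; apply: H. Qed.

Lemma T3_2 (w : vecZ 2 3) : sv w = 0%R -> iter 3 (@Tmap 2 3) w = w.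
Proof. by move=> h; apply/ffunP => i; rewrite T3 h mulr0 addr0 Z2_opp. Qed.

Lemma per2 (a : vecZ 2 3) : is_eventual_period a 3.
Proof.
split=> //; exists 1%N => k hk; apply/ffunP => i.
have z : (2%:R ^+ k : 'Z_2)%R = 0%R := @pow2_0 1 k hk isT.
by rewrite addnC iterD T3 s_iter z mul0r mulr0 addr0 Z2_opp.
Qed.

Lemma per2k k (a : vecZ (2 ^ k) 3) : (0 < k)%N -> is_eventual_period a 6.
Proof.
move=> k0; split=> //; exists k => n hn; apply/ffunP => i.
by rewrite addnC iterD T6 s_iter pow2_0 ?mul0r ?mulr0 ?addr0.
Qed.


Lemma contra1 (R : nzRingType) (x y : R) :
  x = y -> (x - y = 1 \/ x - y = -1)%R -> False.
Proof.
move=> -> [] /eqP; rewrite subrr eq_sym ?oppr_eq0 oner_eq0 //.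
Qed.

Lemma contra2 (R : nzRingType) (x y : R) : (2%:R : R)%R != 0%R ->
  x = y -> (x - y = 2%:R \/ x - y = - 2%:R)%R -> False.
Proof.
move=> h2 -> [] /eqP; rewrite subrr eq_sym ?oppr_eq0 (negbTE h2) //.
Qed.

Ltac kill1 o H :=
  have := congr1 (fun v : {ffun _ -> _} => v o) H;
  rewrite /= !(tE0, tE1, tE2, DE0, DE1, DE2, e0E0, e0E1, e0E2);
  move/contra1; apply; (left; ring) || (right; ring).

Theorem proposition5p2 :
  Pmax_is 2 3 3 /\ (forall k : nat, (1 < k)%N -> Pmax_is (2 ^ k) 3 6).
Proof.
split.
  split; last exact: upper per2.
  exists (e0 2); split; first exact: per2.
  move=> Q HQ; have Q0 := proj1 HQ.
  have := minimal_red (isT : (0 < 3)%N) (@T3_2) HQ.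
  move=> HH; rewrite leqNgt; apply/negP => hQ; move: HH.
  case: Q hQ Q0 {HQ} => [|[|[|Q]]] // _ _ H.
  - kill1 o1 H.
  - kill1 o0 H.
move=> k hk.
have k0 : (0 < k)%N by apply: ltnW.
split; last exact: upper (fun a => per2k a k0).
exists (e0 (2 ^ k)); split; first exact: per2k.
move=> Q HQ; have Q0 := proj1 HQ.
have := minimal_red (isT : (0 < 6)%N) (fun w h => T6_0 h) HQ.
move=> HH; rewrite leqNgt; apply/negP => hQ; move: HH.
have h2 := two_neq0 hk.
case: Q hQ Q0 {HQ} => [|[|[|[|[|[|Q]]]]]] // _ _ H.
- kill1 o1 H.
- kill1 o0 H.
- have := congr1 (fun v : {ffun _ -> _} => v o0) H.
  rewrite /= !(tE0, tE1, tE2, DE0, DE1, DE2, e0E0, e0E1, e0E2) => E.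
  apply: (contra2 h2 E); (left; ring) || (right; ring).
- kill1 o1 H.
- kill1 o0 H.
Qed.
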